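(* Let $f,g\in\mathbb{Z}[x,y]$ have no common non-constant factor, let $R^{(y)}=\operatorname{res}(f,g;y)$ and $R^{(x)}=\operatorname{res}(f,g;x)$, and let $\alpha$ and $\beta$ be arbitrary real roots of $R^{(y)}$ and $R^{(x)}$, respectively, with discs $\Delta(\alpha),\Delta(\beta)$ and bounds $L(\alpha),L(\beta)$ constructed as in the context. Then: (1) the polydisc $\Delta(\alpha,\beta):=\Delta(\alpha)\times\Delta(\beta)\subset\mathbb{C}^2$ contains at most one common complex zero of $f$ and $g$; if it contains one, then this zero is real and equals $(\alpha,\beta)$; (2) for every point $(z_1,z_2)$ on the boundary of $\Delta(\alpha,\beta)$, $|R^{(y)}(z_1)|>L(\alpha)$ if $z_1\in\partial\Delta(\alpha)$, and $|R^{(x)}(z_2)|>L(\beta)$ if $z_2\in\partial\Delta(\beta)$.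
   Context: Notation: for an interval $I=(a,b)\subset\mathbb{R}$, $m_I=(a+b)/2$, $r_I=(b-a)/2$; $\Delta_r(m)=\{z\in\mathbb{C}:|z-m|<r\}$. For $p\in\mathbb{R}[x]$ and reals $m,r,K$, $T^p_K(m,r)$ means $|p(m)|-K\sum_{k\ge1}\left|\frac{p^{(k)}(m)}{k!}\right|r^k>0$. Construction: write $R^{(y)}=\prod_{i=1}^{\deg R^{(y)}} r_i^{\,i}$ with $r_i\in\mathbb{Z}[x]$ square-free and pairwise coprime. If $\alpha$ is a root of $r_{i_0}$, let $I=I(\alpha)$ be an open real interval containing $\alpha$ such that $T^{(r_{i_0})'}_{3/2}(m_I,8r_I)$ holds and $T^{r_i}_1(m_I,8r_I)$ holds for all $i\neq i_0$; set $\Delta(\alpha):=\Delta_{2r_I}(m_I)$ and $L(\alpha):=2^{-i_0-\deg R^{(y)}}|R^{(y)}(m_I-2r_I)|$. $\Delta(\beta)$, $L(\beta)$ are constructed identically from $R^{(x)}$ and its square-free factorization. *)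

(* Defs.v *)
From HB Require Import structures.
From mathcomp Require Import all_boot all_order all_algebra.
From mathcomp Require Import complex.
From mathcomp Require Import reals.
Set Implicit Arguments. Unset Strict Implicit. Unset Printing Implicit Defensive.
Import Order.TTheory GRing.Theory Num.Theory.
Local Open Scope ring_scope.

(* Bivariate integer polynomials f in Z[x,y] are represented as
   f : {poly {poly int}} with OUTER variable y and INNER variable x,
   i.e. f = \sum_j c_j(x) y^j.  Hence res(f,g;y) = resultant f g (a polynomial
   in x) and res(f,g;x) = resultant (swapXY f) (swapXY g) (a polynomial in y). *)

Definition res_y (f g : {poly {poly int}}) : {poly int} := resultant f g.
Definition res_x (f g : {poly {poly int}}) : {poly int} :=
  resultant (swapXY f) (swapXY g).

Definition polyZ (K : nzRingType) (p : {poly int}) : {poly K} :=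
  map_poly (fun c : int => c%:~R) p.

Definition evZ (K : nzRingType) (p : {poly int}) (z : K) : K := (polyZ K p).[z].

(* evaluation of f in Z[x,y] at (x,y) = (z1,z2) *)
Definition evXY (K : comNzRingType) (f : {poly {poly int}}) (z1 z2 : K) : K :=
  ((map_poly (polyZ K) f).[z2%:P]).[z1].

Definition no_common_factor (f g : {poly {poly int}}) : Prop :=
  forall h q1 q2 : {poly {poly int}}, f = h * q1 -> g = h * q2 ->
    exists c : int, h = c%:P%:P.

Definition squarefreeZ (p : {poly int}) : Prop :=
  forall q s : {poly int}, p = q * q * s -> (size q <= 1)%N.

Definition coprimeZ (p q : {poly int}) : Prop :=
  forall h s t : {poly int}, p = h * s -> q = h * t -> (size h <= 1)%N.

Definition sqfree_factorization (Rp : {poly int}) (r : nat -> {poly int}) : Prop :=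
  [/\ Rp = \prod_(1 <= i < (size Rp).-1.+1) r i ^+ i,
      (forall i, (1 <= i <= (size Rp).-1)%N -> squarefreeZ (r i)) &
      (forall i j, (1 <= i <= (size Rp).-1)%N -> (1 <= j <= (size Rp).-1)%N ->
         i != j -> coprimeZ (r i) (r j))].

(* T^p_K(m,r) :  |p(m)| - K * sum_{k>=1} |p^{(k)}(m)/k!| r^k > 0
   (the sum is finite: terms with k >= size p vanish) *)
Definition Ttest (R : realType) (p : {poly int}) (K m r : R) : Prop :=
  0 < `|evZ p m| -
      K * \sum_(1 <= k < size p) `|(polyZ R p)^`(k).[m] / (k`!)%:R| * r ^+ k.

Definition admissible_interval (R : realType) (Rp : {poly int})
    (r : nat -> {poly int}) (i0 : nat) (alpha a b : R) : Prop :=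
  let mI := (a + b) / 2 in
  let rI := (b - a) / 2 in
  [/\ a < alpha < b,
      Ttest (r i0)^`() (3 / 2) mI (8 * rI) &
      forall i, (1 <= i <= (size Rp).-1)%N -> i != i0 ->
        Ttest (r i) 1 mI (8 * rI)].

Definition Lbound (R : realType) (Rp : {poly int}) (i0 : nat) (a b : R) : R :=
  (2 ^+ (i0 + (size Rp).-1))^-1 * `|evZ Rp ((a + b) / 2 - 2 * ((b - a) / 2))|.

(* Main.v *)
Require Import Defs.
From HB Require Import structures.
From mathcomp Require Import all_boot all_order all_algebra.
From mathcomp Require Import complex.
From mathcomp Require Import reals.
From mathcomp Require Import ring lra zify.
From mathcomp Require polyorder.
Import Order.TTheory GRing.Theory Num.Theory.
Local Open Scope ring_scope.
Local Open Scope complex_scope.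

Section Norm.
Variable R : rcfType.
Local Notation C := R[i].
Implicit Types x y z : C.

Definition N z : R := complex.Re `|z|.

Lemma normE z : `|z| = (N z)%:C.
Proof. by rewrite /N RRe_real ?normr_real. Qed.

Lemma N_ge0 z : 0 <= N z.
Proof. by rewrite -ler0c -normE normr_ge0. Qed.

Lemma NM x y : N (x * y) = N x * N y.
Proof. by apply: complexI; rewrite rmorphM -!normE normrM. Qed.

Lemma ND x y : N (x + y) <= N x + N y.
Proof. by rewrite -lecR rmorphD -!normE ler_normD. Qed.

Lemma NR (r : R) : N r%:C = `|r|.
Proof. by rewrite /N normc_def /= expr0n /= addr0 sqrtr_sqr. Qed.

Lemma NN x : N (- x) = N x.
Proof. by rewrite /N normrN. Qed.

Lemma NX x n : N (x ^+ n) = N x ^+ n.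
Proof. by apply: complexI; rewrite rmorphXn -!normE normrX. Qed.

Lemma N_eq0 x : (N x == 0) = (x == 0).
Proof. by rewrite -[x == 0]normr_eq0 normE -(inj_eq (@complexI R)) rmorph0. Qed.

Lemma N0 : N 0 = 0.
Proof. by apply/eqP; rewrite N_eq0. Qed.

Lemma N_sum (I : Type) (s : seq I) (F : I -> C) :
  N (\sum_(i <- s) F i) <= \sum_(i <- s) N (F i).
Proof.
elim: s => [|i s IH]; first by rewrite !big_nil N0.
rewrite !big_cons; apply: le_trans (ND _ _) _; exact: lerD.
Qed.

Lemma ltN x (s : R) : (`|x| < s%:C) = (N x < s).
Proof. by rewrite normE ltcR. Qed.

Lemma eqN x (s : R) : (`|x| = s%:C) <-> (N x = s).
Proof. by rewrite normE; split => [/complexI|->]. Qed.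

End Norm.
Arguments N {R}.

Section Res.
Variable A : comNzRingType.
Implicit Types p q : {poly A}.

Lemma res_const_l p q : (size p <= 1)%N -> resultant p q = p`_0 ^+ (size q).-1.
Proof.
move=> sp; have dp0 : (size p).-1 = 0%N by case: (size p) sp => [|[]].
rewrite /resultant.
have -> : Sylvester_mx p q = (p`_0)%:M.
  apply/matrixP => i j; rewrite Sylvester_mxE !mxE.
  case: splitP => k Hk; last by case: k {Hk} => k kp; exfalso; move: kp; rewrite dp0.
  rewrite -(inj_eq val_inj) /= Hk.
  have [jk|jk|jk] := ltngtP j k; first by [].
    by rewrite nth_default ?mul0rn // (leq_trans sp) // subn_gt0.
  by rewrite jk subnn.
by rewrite det_scalar dp0 addn0.
Qed.

Lemma res_const_r p q : (size q <= 1)%N -> resultant p q = q`_0 ^+ (size p).-1.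
Proof.
move=> sq; have dq0 : (size q).-1 = 0%N by case: (size q) sq => [|[]].
rewrite /resultant.
have -> : Sylvester_mx p q = (q`_0)%:M.
  apply/matrixP => i j; rewrite Sylvester_mxE !mxE.
  case: splitP => k Hk; first by case: k {Hk} => k kp; exfalso; move: kp; rewrite dq0.
  rewrite -(inj_eq val_inj) /= Hk.
  have -> : ((size q).-1 + k = k)%N by rewrite dq0.
  have [jk|jk|jk] := ltngtP j k; first by [].
    by rewrite nth_default ?mul0rn // (leq_trans sq) // subn_gt0.
  by rewrite jk subnn.
by rewrite det_scalar dq0.
Qed.

Lemma res_common_zero (K : comNzRingType) (h : {rmorphism A -> K}) p q (x : K) :
  (map_poly h p).[x] = 0 -> (map_poly h q).[x] = 0 ->
  h (resultant p q) = 0 \/ resultant p q = 1.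
Proof.
move=> hp hq.
have [sp|sp] := leqP (size p) 1.
  rewrite res_const_l //.
  have hp0 : h p`_0 = 0.
    by move: hp; rewrite [X in map_poly _ X]size1_polyC // map_polyC hornerC.
  case: (size q).-1 => [|n]; first by right.
  by left; rewrite rmorphXn /= hp0 expr0n.
have [sq|sq] := leqP (size q) 1.
  rewrite res_const_r //.
  have hq0 : h q`_0 = 0.
    by move: hq; rewrite [X in map_poly _ X]size1_polyC // map_polyC hornerC.
  case: (size p).-1 => [|n]; first by right.
  by left; rewrite rmorphXn /= hq0 expr0n.
left; have [[u v] /= _ E] := resultant_in_ideal sp sq.
have := congr1 (fun r => (map_poly h r).[x]) E => /=.
by rewrite map_polyC hornerC rmorphD !rmorphM /= hornerD !hornerM hp hq !mulr0 addr0.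
Qed.

End Res.

Section EvXY.
Variable K : comNzRingType.

Lemma evXY_map (f : {poly {poly int}}) (z1 z2 : K) :
  evXY f z1 z2 = (map_poly (horner_eval z1 \o polyZ K) f).[z2].
Proof.
rewrite /evXY [in RHS]map_poly_comp.
rewrite -[z2 in RHS](hornerC z2 z1) -/(horner_eval z1 z2%:P) horner_map /=.
by [].
Qed.

Lemma evXY_swap (f : {poly {poly int}}) (z1 z2 : K) :
  evXY (swapXY f) z2 z1 = evXY f z1 z2.
Proof.
rewrite /evXY /polyZ -swapXY_map.
exact: horner2_swapXY.
Qed.

Lemma res_y_zero (f g : {poly {poly int}}) (z1 z2 : K) :
  evXY f z1 z2 = 0 -> evXY g z1 z2 = 0 ->
  evZ (res_y f g) z1 = 0 \/ res_y f g = 1.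
Proof.
rewrite !evXY_map => hf hg.
have := @res_common_zero _ _ (horner_eval z1 \o polyZ K) _ _ _ hf hg.
by [].
Qed.

Lemma res_x_zero (f g : {poly {poly int}}) (z1 z2 : K) :
  evXY f z1 z2 = 0 -> evXY g z1 z2 = 0 ->
  evZ (res_x f g) z2 = 0 \/ res_x f g = 1.
Proof.
rewrite -(evXY_swap f) -(evXY_swap g) => hf hg.
exact: res_y_zero hf hg.
Qed.

End EvXY.

Lemma size_polyZ (K : numDomainType) p : size (polyZ K p) = size p.
Proof. by rewrite /polyZ size_map_inj_poly //; exact: intr_inj. Qed.

Section Taylor.
Variable R : rcfType.
Local Notation C := R[i].

Definition cf (p : {poly int}) (m : R) (k : nat) : R :=
  (polyZ R p)^`(k).[m] / (k`!)%:R.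

Lemma cfE p m k : cf p m k = (polyZ R p)^`N(k).[m].
Proof.
rewrite /cf nderivn_def hornerMn -mulr_natr mulfK //.
by rewrite pnatr_eq0 -lt0n fact_gt0.
Qed.

Lemma polyZC p : polyZ C p = map_poly (real_complex R) (polyZ R p).
Proof.
rewrite /polyZ -map_poly_comp; apply: eq_map_poly => c /=.
by rewrite rmorph_int.
Qed.

Lemma evZC p (x : R) : evZ p x%:C = (evZ p x)%:C.
Proof. by rewrite /evZ polyZC horner_map. Qed.

Lemma taylorZ p m (w : C) :
  evZ p (m%:C + w) = \sum_(k < size p) (cf p m k)%:C * w ^+ k.
Proof.
rewrite /evZ (@nderiv_taylor_wide _ (size p)); last 2 first.
- exact: mulrC.
- by rewrite size_polyZ.
apply: eq_bigr => k _; rewrite cfE polyZC nderivn_map horner_map //.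
Qed.

End Taylor.
Arguments cf {R}.

Lemma sum2n k : ((\sum_(i < k) 2 ^ i).+1 = 2 ^ k)%N.
Proof.
elim: k => [|k IH]; first by rewrite big_ord0.
by rewrite big_ord_recr /= -addSn IH expnS; lia.
Qed.

Lemma nat_key j : (16 * (2 ^ (j + 2) - 1) <= 3 * (j + 2) * 8 ^ (j + 1))%N.
Proof.
elim: j => [//|j IH]; rewrite !addSn !expnS.
have : (1 <= 2 ^ (j + 2))%N by rewrite expn_gt0.
have : (1 <= 8 ^ (j + 1))%N by rewrite expn_gt0.
nia.
Qed.

Lemma nat_key2 k : (2 <= k)%N -> (16 * (\sum_(i < k) 2 ^ i)%N <= 3 * k * 8 ^ k.-1)%N.
Proof.
move=> k2; have := nat_key (k - 2); rewrite subnK //.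
have -> : (k - 2 + 1 = k.-1)%N by lia.
have := sum2n k; lia.
Qed.

Section Anal.
Variable R : rcfType.
Local Notation C := R[i].
Variables (c : nat -> R) (n : nat).

Definition Pc (w : C) := \sum_(k < n) (c k)%:C * w ^+ k.
Definition G (k : nat) (x y : C) := \sum_(i < k) x ^+ (k.-1 - i) * y ^+ i.
Definition Qc (x y : C) := \sum_(k < n) (c k)%:C * G k x y.

Lemma Pc_sub w t : Pc w - Pc t = (w - t) * Qc t w.
Proof.
rewrite /Pc /Qc -sumrB mulr_sumr; apply: eq_bigr => k _.
rewrite -mulrBr -[w ^+ k - t ^+ k]opprB subrXX -/(G k t w).
by rewrite -mulNr opprB mulrCA.
Qed.

Lemma Qc_c1 x y : (1 < n)%N ->
  Qc x y - (c 1)%:C = \sum_(2 <= k < n) (c k)%:C * G k x y.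
Proof.
move=> n1; rewrite /Qc -(big_mkord xpredT (fun k => (c k)%:C * G k x y)).
rewrite big_ltn ?(ltn_trans _ n1) // big_ltn //.
rewrite /G big_ord0 big_ord1 subn0 !expr0 mulr1 mulr0 add0r.
by rewrite mulr1 addrC addKr.
Qed.

Lemma NG k x y (r1 r2 : R) : N x <= r1 -> N y <= r2 ->
  N (G k x y) <= \sum_(i < k) r1 ^+ (k.-1 - i) * r2 ^+ i.
Proof.
move=> hx hy; apply: le_trans (N_sum _ _ _ _) _; apply: ler_sum => i _.
have r10 : 0 <= r1 by exact: le_trans (N_ge0 _ _) hx.
have r20 : 0 <= r2 by exact: le_trans (N_ge0 _ _) hy.
rewrite NM !NX; apply: ler_pM; rewrite ?exprn_ge0 ?N_ge0 //.
- by apply: lerXn2r; rewrite ?nnegrE ?N_ge0.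
- by apply: lerXn2r; rewrite ?nnegrE ?N_ge0.

Qed.

Lemma key_bound k (r : R) : (2 <= k)%N -> 0 <= r ->
  \sum_(i < k) r ^+ (k.-1 - i) * (2 * r) ^+ i <= 3 / 16 * k%:R * (8 * r) ^+ k.-1.
Proof.
move=> k2 r0.
have -> : \sum_(i < k) r ^+ (k.-1 - i) * (2 * r) ^+ i =
          (\sum_(i < k) 2 ^ i)%N%:R * r ^+ k.-1.
  rewrite natr_sum mulr_suml; apply: eq_bigr => i _.
  rewrite exprMn mulrCA -exprD subnK ?natrX //.
  by case: k k2 i => // k _ [i /= ?].
rewrite exprMn mulrA; apply: ler_wpM2r; first exact: exprn_ge0.
have := @nat_key2 k k2; rewrite -(ler_nat R) !natrM natrX => h.
lra.
Qed.

End Anal.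
Arguments Pc {R}. Arguments G {R}. Arguments Qc {R}.

Section Anal2.
Variable R : rcfType.
Local Notation C := R[i].
Variables (c : nat -> R) (n : nat).

Lemma Pc_c0 w : (0 < n)%N ->
  Pc c n w - (c 0)%:C = \sum_(1 <= k < n) (c k)%:C * w ^+ k.
Proof.
move=> n0; rewrite /Pc -(big_mkord xpredT (fun k => (c k)%:C * w ^+ k)).
by rewrite big_ltn // expr0 mulr1 addrC addKr.
Qed.

Lemma A1 (rho : R) w : (0 < n)%N -> 0 <= rho -> N w <= rho ->
  N (Pc c n w - (c 0)%:C) <= 1 / 4 * \sum_(1 <= k < n) `|c k| * (4 * rho) ^+ k.
Proof.
move=> n0 r0 hw; rewrite Pc_c0 // mulr_sumr.
apply: le_trans (N_sum _ _ _ _) _; rewrite big_nat [X in _ <= X]big_nat.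
apply: ler_sum => k /andP[k1 _]; rewrite NM NX NR.
rewrite mulrCA; apply: ler_wpM2l; first exact: normr_ge0.
have hw' : N w ^+ k <= rho ^+ k.
  by apply: lerXn2r; rewrite ?nnegrE ?N_ge0 //.
apply: le_trans hw' _; rewrite exprMn mulrA ler_peMl ?exprn_ge0 //.
have : 4 <= (4 : R) ^+ k.
  case: k k1 => // k _; rewrite exprS.
  have h1 : 1 <= (4:R) ^+ k by apply: exprn_ege1; lra.
  lra.
lra.
Qed.


Lemma A2 (rho : R) w w0 : (0 < n)%N -> 0 <= rho ->
  0 < `|c 0| - \sum_(1 <= k < n) `|c k| * (4 * rho) ^+ k ->
  N w <= rho -> N w0 <= rho ->
  0 < N (Pc c n w0) /\ N (Pc c n w0) < 2 * N (Pc c n w).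
Proof.
move=> n0 r0 HT hw hw0.
set S := \sum_(1 <= k < n) _ in HT.
have e1 := @A1 rho w n0 r0 hw; have e0 := @A1 rho w0 n0 r0 hw0.
have t1 : `|c 0| <= N (Pc c n w) + N (Pc c n w - (c 0)%:C).
  rewrite -NR -[N (_ - _)]NN; apply: le_trans (ND _ _ _); by rewrite opprB addrC subrK.
have t0 : N (Pc c n w0) <= `|c 0| + N (Pc c n w0 - (c 0)%:C).
  rewrite -NR; apply: le_trans (ND _ _ _); by rewrite addrC subrK.
have t2 : `|c 0| <= N (Pc c n w0) + N (Pc c n w0 - (c 0)%:C).
  rewrite -NR -[N (_ - _)]NN; apply: le_trans (ND _ _ _); by rewrite opprB addrC subrK.
rewrite -/S in e1 e0.
have hS : 0 <= S by apply: sumr_ge0 => k _; apply: mulr_ge0; rewrite ?exprn_ge0 //; lra.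
split; lra.
Qed.

Lemma B0 (r : R) : (1 < n)%N -> 0 <= r ->
  0 < `|c 1| - 3 / 2 * \sum_(1 <= k < n.-1) `|(k.+1)%:R * c k.+1| * (8 * r) ^+ k ->
  \sum_(2 <= k < n) `|c k| * (3 / 16 * k%:R * (8 * r) ^+ k.-1) < `|c 1| / 8.
Proof.
move=> n1 r0 HB.
have -> : \sum_(2 <= k < n) `|c k| * (3 / 16 * k%:R * (8 * r) ^+ k.-1) =
   3 / 16 * \sum_(1 <= k < n.-1) `|(k.+1)%:R * c k.+1| * (8 * r) ^+ k.
  rewrite mulr_sumr -{1}[2%N]/(1 + 1)%N big_addn subn1.
  apply: eq_bigr => k _; rewrite addn1 normrM normr_nat /=.
  by rewrite mulrCA !mulrA [_ * `|c _|]mulrC.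
lra.
Qed.

Lemma B1 (r t : R) w : (1 < n)%N -> 0 <= r -> `|t| <= r -> N w <= 2 * r ->
  N (Qc c n t%:C w - (c 1)%:C) <=
  \sum_(2 <= k < n) `|c k| * (3 / 16 * k%:R * (8 * r) ^+ k.-1).
Proof.
move=> n1 r0 ht hw; rewrite Qc_c1 //.
apply: le_trans (N_sum _ _ _ _) _; rewrite big_nat [X in _ <= X]big_nat.
apply: ler_sum => k /andP[k2 _]; rewrite NM NR.
apply: ler_wpM2l; first exact: normr_ge0.
apply: le_trans (@key_bound R k r k2 r0).
by apply: NG; rewrite ?NR.
Qed.

Lemma Bq (r t : R) w : (1 < n)%N -> 0 <= r ->
  0 < `|c 1| - 3 / 2 * \sum_(1 <= k < n.-1) `|(k.+1)%:R * c k.+1| * (8 * r) ^+ k ->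
  `|t| <= r -> N w <= 2 * r ->
  7 / 8 * `|c 1| < N (Qc c n t%:C w) /\ N (Qc c n t%:C w) < 9 / 8 * `|c 1|.
Proof.
move=> n1 r0 HB ht hw.
have e := @B1 r t w n1 r0 ht hw; have e0 := @B0 r n1 r0 HB.
have t1 : `|c 1| <= N (Qc c n t%:C w) + N (Qc c n t%:C w - (c 1)%:C).
  rewrite -NR -[N (_ - _)]NN; apply: le_trans (ND _ _ _); by rewrite opprB addrC subrK.
have t0 : N (Qc c n t%:C w) <= `|c 1| + N (Qc c n t%:C w - (c 1)%:C).
  rewrite -NR; apply: le_trans (ND _ _ _); by rewrite addrC subrK.
split; lra.
Qed.

Lemma B_uniq (r t : R) w : (1 < n)%N -> 0 <= r ->
  0 < `|c 1| - 3 / 2 * \sum_(1 <= k < n.-1) `|(k.+1)%:R * c k.+1| * (8 * r) ^+ k ->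
  `|t| <= r -> N w <= 2 * r -> Pc c n w = Pc c n t%:C -> w = t%:C.
Proof.
move=> n1 r0 HB ht hw he.
have [q _] := @Bq r t w n1 r0 HB ht hw.
have : (w - t%:C) * Qc c n t%:C w = 0 by rewrite -Pc_sub he subrr.
move/eqP; rewrite mulf_eq0 => /orP[/eqP/subr0_eq //|/eqP hq].
move: q; rewrite hq (N0 R) => q; exfalso; have := normr_ge0 (c 1); lra.
Qed.

Lemma B_ratio (r t : R) w : (1 < n)%N -> 0 < r ->
  0 < `|c 1| - 3 / 2 * \sum_(1 <= k < n.-1) `|(k.+1)%:R * c k.+1| * (8 * r) ^+ k ->
  `|t| < r -> N w = 2 * r -> Pc c n t%:C = 0 ->
  N (Pc c n (- (2 * r)%:C)) < 4 * N (Pc c n w).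
Proof.
move=> n1 r0 HB ht hw hP.
have r0' : 0 <= r by lra.
have ht' : `|t| <= r by lra.
have hw1 : N w <= 2 * r by rewrite hw.
have [q1 _] := @Bq r t w n1 r0' HB ht' hw1.
have hw0 : N (- (2 * r)%:C) <= 2 * r by rewrite NN NR ger0_norm //; lra.
have [_ q2] := @Bq r t _ n1 r0' HB ht' hw0.
have E1 : Pc c n w = (w - t%:C) * Qc c n t%:C w by rewrite -Pc_sub hP subr0.
have E2 : Pc c n (- (2 * r)%:C) = (- (2 * r)%:C - t%:C) * Qc c n t%:C (- (2 * r)%:C).
  by rewrite -Pc_sub hP subr0.
rewrite E1 E2 !NM.
have d1 : 2 * r - `|t| <= N (w - t%:C).
  have : N w <= N (w - t%:C) + N (t%:C) by rewrite -[X in N X](subrK t%:C) ND.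
  rewrite NR; lra.
have d2 : N (- (2 * r)%:C - t%:C) = 2 * r + t.
  have nt : - t <= `|t| by rewrite -normrN ler_norm.
  rewrite -opprD -rmorphD NN NR ger0_norm //; lra.
rewrite d2.
set X := N (w - t%:C) in d1 *; set Y := N (Qc c n t%:C w) in q1 *.
set Z := N (Qc c n t%:C (- (2 * r)%:C)) in q2 *.
set A := `|c 1| in q1 q2 HB *.
have nt : - t <= `|t| by rewrite -normrN ler_norm.
have pt : t <= `|t| by rewrite ler_norm.
have Z0 : 0 <= Z by apply: N_ge0.
have hA : 0 < A by lra.
have h1 : (2 * r + t) * Z <= (2 * r + t) * (9 / 8 * A).
  by apply: ler_wpM2l; lra.
have h2 : (2 * r - `|t|) * (7 / 8 * A) <= X * Y.
  by apply: ler_pM; lra.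
have hl : 0 < 38 * r - 9 * t - 28 * `|t| by lra.
have h3 := mulr_gt0 hA hl.
nra.
Qed.

End Anal2.

Section Bridge.
Variable R : realType.
Local Notation C := R[i].

Lemma evZ_taylor p (m : R) (w : C) : evZ p (m%:C + w) = Pc (cf p m) (size p) w.
Proof. exact: taylorZ. Qed.

Lemma cf0 p (m : R) : cf p m 0 = evZ p m.
Proof. by rewrite /cf /evZ derivn0 fact0 divr1. Qed.

Lemma polyZ_deriv (K : nzRingType) p : polyZ K p^`() = (polyZ K p)^`().
Proof. by rewrite /polyZ deriv_map. Qed.

Lemma cf_deriv p (m : R) k : cf p^`() m k = (k.+1)%:R * cf p m k.+1.
Proof.
rewrite /cf polyZ_deriv -derivSn factS natrM invfM.
have h1 : (k.+1%:R : R) != 0 by rewrite pnatr_eq0.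
have h2 : (k`!%:R : R) != 0 by rewrite pnatr_eq0 -lt0n fact_gt0.
field; by rewrite h2 /= addrC natr1 pnatr_eq0.
Qed.

Lemma size_derivZ (p : {poly int}) : size p^`() = (size p).-1.
Proof.
by rewrite -(size_polyZ R) polyZ_deriv polyorder.size_deriv size_polyZ.
Qed.

Lemma T1_bridge p (m r : R) : Ttest p 1 m r ->
  0 < `|cf p m 0| - \sum_(1 <= k < size p) `|cf p m k| * r ^+ k.
Proof. by rewrite /Ttest mul1r cf0. Qed.

Lemma T2_bridge p (m r : R) : Ttest p^`() (3 / 2) m r ->
  0 < `|cf p m 1| - 3 / 2 *
    \sum_(1 <= k < (size p).-1) `|(k.+1)%:R * cf p m k.+1| * r ^+ k.
Proof.
rewrite /Ttest size_derivZ -cf0 cf_deriv mul1r.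
congr (_ < _ - _ * _); apply: eq_bigr => k _.
by rewrite -cf_deriv.
Qed.


Lemma evZ0 (K : nzRingType) (x : K) : evZ 0 x = 0.
Proof. by rewrite /evZ /polyZ map_poly0 horner0. Qed.

Lemma evZ_shift p (m : R) (z : C) : evZ p z = Pc (cf p m) (size p) (z - m%:C).
Proof. by rewrite -evZ_taylor addrC subrK. Qed.

Lemma F1 p (m rI : R) (z z0 : C) : 0 < rI -> Ttest p 1 m (8 * rI) ->
  N (z - m%:C) <= 2 * rI -> N (z0 - m%:C) <= 2 * rI ->
  0 < N (evZ p z0) /\ N (evZ p z0) < 2 * N (evZ p z).
Proof.
move=> r0 HT0 hz hz0; have HT := @T1_bridge p m _ HT0.
have n0 : (0 < size p)%N.
  case: (posnP (size p)) => [s0|//]; move: HT.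
  have -> : p = 0 by apply/eqP; rewrite -size_poly_eq0 s0.
  by rewrite size_poly0 big_geq // subr0 cf0 evZ0 normr0 ltxx.
rewrite (evZ_shift p m z) (evZ_shift p m z0).
apply: (@A2 R (cf p m) (size p) (2 * rI)) => //; first lra.
by rewrite (_ : 4 * (2 * rI) = 8 * rI) //; lra.
Qed.

Lemma F2 p (m rI alpha : R) : 0 < rI -> `|alpha - m| < rI -> evZ p alpha = 0 ->
  Ttest p^`() (3 / 2) m (8 * rI) ->
  (forall z : C, N (z - m%:C) <= 2 * rI -> evZ p z = 0 -> z = alpha%:C) /\
  (forall z : C, N (z - m%:C) = 2 * rI ->
     N (evZ p (m - 2 * rI)%:C) < 4 * N (evZ p z)).
Proof.
move=> r0 ht ha HT0.
have n1 : (1 < size p)%N.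
  case: (leqP (size p) 1) => [s1|//]; move: HT0.
  have -> : p^`() = 0 by apply/eqP; rewrite -size_poly_eq0 size_derivZ; case: (size p) s1 => [|[]].
  by rewrite /Ttest size_poly0 big_geq // mulr0 subr0 evZ0 normr0 ltxx.
have HB := @T2_bridge p m _ HT0.
have hP : Pc (cf p m) (size p) (alpha - m)%:C = 0.
  by rewrite -[alpha - m]/(alpha - m) rmorphB -evZ_shift evZC ha.
have r0' : 0 <= rI by lra.
split.
- move=> z hz hz0.
  have := @B_uniq R (cf p m) (size p) rI (alpha - m) (z - m%:C) n1 r0' HB (ltW ht) hz.
  rewrite -evZ_shift hz0 hP => /(_ erefl) /eqP.
  by rewrite rmorphB subr_eq subrK => /eqP.
- move=> z hz.
  have := @B_ratio R (cf p m) (size p) rI (alpha - m) (z - m%:C) n1 r0 HB ht hz hP.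
  rewrite -!evZ_shift rmorphB.
  have E : (m%:C - (2 * rI)%:C) - m%:C = - (2 * rI)%:C :> C by rewrite addrC addKr.
  by rewrite (evZ_shift p m (_ - _)) E.
Qed.

End Bridge.

Lemma N1 (R : rcfType) : N (1 : R[i]) = 1.
Proof. by rewrite -(rmorph1 (real_complex R)) NR normr1. Qed.

Lemma N_prod (R : rcfType) (s : seq nat) (F : nat -> R[i]) :
  N (\prod_(i <- s) F i) = \prod_(i <- s) N (F i).
Proof.
elim: s => [|i s IH]; first by rewrite !big_nil N1.
by rewrite !big_cons NM IH.
Qed.

Lemma evZM (K : comNzRingType) (p q : {poly int}) (z : K) :
  evZ (p * q) z = evZ p z * evZ q z.
Proof. by rewrite /evZ /polyZ rmorphM hornerM. Qed.

Lemma evZX (K : comNzRingType) (p : {poly int}) n (z : K) :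
  evZ (p ^+ n) z = evZ p z ^+ n.
Proof. by rewrite /evZ /polyZ rmorphXn horner_exp. Qed.

Lemma evZ1 (K : comNzRingType) (z : K) : evZ 1 z = 1.
Proof. by rewrite /evZ /polyZ rmorph1 hornerC. Qed.

Lemma evZ_prod (K : comNzRingType) (s : seq nat) (r : nat -> {poly int}) (z : K) :
  evZ (\prod_(i <- s) r i ^+ i) z = \prod_(i <- s) evZ (r i) z ^+ i.
Proof.
elim: s => [|j s IH]; first by rewrite !big_nil evZ1.
by rewrite !big_cons evZM evZX IH.
Qed.

Lemma evZ_const (K : nzRingType) (p : {poly int}) (z z' : K) :
  (size p <= 1)%N -> evZ p z = evZ p z'.
Proof. by move=> sp; rewrite /evZ [p]size1_polyC // /polyZ map_polyC !hornerC. Qed.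

Lemma deg_prod (s : seq nat) (r : nat -> {poly int}) :
  (forall i, i \in s -> r i != 0) ->
  \prod_(i <- s) r i ^+ i != 0 /\
  (size (\prod_(i <- s) r i ^+ i)).-1 = (\sum_(i <- s) i * (size (r i)).-1)%N.
Proof.
elim: s => [|j s IH] H; first by rewrite !big_nil oner_eq0 size_poly1.
have [nz1 e1] := IH (fun i hi => H i (mem_behead (s:=j :: s) hi)).
have nzj : r j ^+ j != 0 by rewrite expf_neq0 // H ?mem_head.
rewrite !big_cons mulf_neq0 //; split => //.
rewrite size_mul // -e1 [(j * _)%N]mulnC -size_exp.
move: nzj nz1; rewrite -!size_poly_gt0.
case: (size (r j ^+ j)) => // a _; case: (size _) => // b _.
by rewrite /= addnS.
Qed.

Lemma prod_lt (R : realFieldType) (s : seq nat) i0 (x y : nat -> R) (e : nat -> nat) :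
  i0 \in s -> uniq s -> (forall i, 0 <= x i) ->
  (forall i, i \in s -> i != i0 -> 0 < y i /\ y i <= 2 ^+ e i * x i) ->
  0 <= y i0 -> y i0 < 2 ^+ e i0 * x i0 ->
  \prod_(i <- s) y i < 2 ^+ (\sum_(i <- s) e i)%N * \prod_(i <- s) x i.
Proof.
move=> hi u hx hy y0 yl.
rewrite (bigD1_seq i0 hi u) /= (bigD1_seq i0 hi u) /= (bigD1_seq i0 hi u) /= exprD.
have Y0 : 0 < \prod_(i <- s | i != i0) y i.
  rewrite big_seq_cond; apply: prodr_gt0 => i /andP[h1 h2].
  by have [] := hy i h1 h2.
have YX : \prod_(i <- s | i != i0) y i <=
          2 ^+ (\sum_(i <- s | i != i0) e i)%N * \prod_(i <- s | i != i0) x i.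
  rewrite -prodrXr -big_split /= big_seq_cond [X in _ <= X]big_seq_cond.
  apply: ler_prod => i /andP[h1 h2]; have [a b] := hy i h1 h2.
  by rewrite (ltW a) b.
have x0 : 0 <= 2 ^+ e i0 * x i0 by apply: mulr_ge0; [exact: exprn_ge0|].
apply: (lt_le_trans (y := 2 ^+ e i0 * x i0 * \prod_(i <- s | i != i0) y i)).
  by rewrite ltr_pM2r.
rewrite mulrACA; apply: ler_wpM2l => //.
Qed.

Lemma T2_size (R : realType) p (K m r : R) : 0 <= K -> Ttest p^`() K m r -> (1 < size p)%N.
Proof.
move=> K0; case: (leqP (size p) 1) => [s1|//].
have -> : p^`() = 0.
  by apply/eqP; rewrite -size_poly_eq0 (@size_derivZ R); case: (size p) s1 => [|[]].
by rewrite /Ttest size_poly0 big_geq // mulr0 subr0 evZ0 normr0 ltxx.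
Qed.

Lemma Main (R : realType) (Rp : {poly int}) (r : nat -> {poly int}) (i0 : nat)
    (alpha a b : R) :
  sqfree_factorization Rp r -> (1 <= i0 <= (size Rp).-1)%N ->
  evZ (r i0) alpha = 0 -> admissible_interval Rp r i0 alpha a b ->
  (forall z : R[i], N (z - ((a + b) / 2)%:C) < 2 * ((b - a) / 2) ->
      evZ Rp z = 0 -> z = alpha%:C) /\
  (forall z : R[i], N (z - ((a + b) / 2)%:C) = 2 * ((b - a) / 2) ->
      Lbound Rp i0 a b < N (evZ Rp z)).
Proof.
move=> [HR _ _] hi0 ha [/andP[aa ab] HT' HTo].
set m := (a + b) / 2 in HT' HTo *; set rI := (b - a) / 2 in HT' HTo *.
have r0 : 0 < rI by rewrite /rI; lra.
have ht : `|alpha - m| < rI by rewrite ltr_norml /m /rI; lra.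
set D := (size Rp).-1 in hi0 HR HTo *.
set s := index_iota 1 D.+1 in HR.
have us : uniq s by exact: iota_uniq.
have i0s : i0 \in s by rewrite mem_index_iota ltnS.
have Rp0 : Rp != 0.
  rewrite -size_poly_gt0; move: hi0; rewrite /D; case: (size Rp) => // ; lia.
have rnz : forall i, i \in s -> r i != 0.
  move=> i hi; apply/negP => /eqP ri0; move: Rp0; rewrite HR (bigD1_seq i) //= ri0.
  move: hi; rewrite mem_index_iota; case: i {ri0} => // i _.
  by rewrite expr0n mul0r eqxx.
have [_ degE] := @deg_prod s r rnz; rewrite -HR -/D in degE.
have [F2a F2b] := @F2 R (r i0) m rI alpha r0 ht ha HT'.
have HTo' : forall i, i \in s -> i != i0 -> Ttest (r i) 1 m (8 * rI).
  by move=> i; rewrite mem_index_iota ltnS => hi hne; apply: HTo.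
split.
- move=> z hz; rewrite HR evZ_prod => /eqP; rewrite prodf_seq_eq0.
  case/hasP => i hi /=; rewrite expf_eq0 => /andP[_ /eqP hri].
  have [ei|hne] := eqVneq i i0; first by move: hri; rewrite ei => hri; apply: F2a => //; exact: ltW.
  have [h _] := @F1 R (r i) m rI z z r0 (HTo' i hi hne) (ltW hz) (ltW hz).
  by move: h; rewrite hri (N0 R) ltxx.
move=> z hz.
set z0 : R[i] := (m - 2 * rI)%:C.
have hz0 : N (z0 - m%:C) = 2 * rI.
  rewrite /z0 rmorphB addrC addKr NN NR ger0_norm //; lra.
have -> : Lbound Rp i0 a b = (2 ^+ (i0 + D))^-1 * N (evZ Rp z0).
  by rewrite /Lbound -/m -/rI -/D /z0 evZC NR.
have p2 : 0 < (2 : R) ^+ (i0 + D) by apply: exprn_gt0.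
rewrite ltr_pdivrMl // HR !evZ_prod !N_prod.
have -> : (i0 + D)%N = (\sum_(i <- s) (i * (size (r i)).-1 + (i == i0) * i0))%N.
  rewrite big_split /= -degE addnC; congr (_ + _)%N.
  rewrite (bigD1_seq i0) //= eqxx mul1n big1 ?addn0 // => i /negbTE ->.
  by rewrite mul0n.
apply: (@prod_lt _ s i0) => //.
- by move=> i; rewrite (NX R) exprn_ge0 // N_ge0.
- move=> i hi hne; rewrite (negbTE hne) mul0n addn0 !(NX R).
  have hz1 : N (z - m%:C) <= 2 * rI by rewrite hz.
  have hz01 : N (z0 - m%:C) <= 2 * rI by rewrite hz0.
  have [p0 pl] := @F1 R (r i) m rI z z0 r0 (HTo' i hi hne) hz1 hz01.
  split; first exact: exprn_gt0.
  set k := (i * _)%N.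
  have h1 : 1 <= (2 : R) ^+ k by apply: exprn_ege1; lra.
  case: (leqP (size (r i)) 1) => [s1|s2].
    rewrite (@evZ_const _ (r i) z0 z s1).
    have := exprn_ge0 i (N_ge0 R (evZ (r i) z)); nra.
  have e1 : N (evZ (r i) z0) ^+ i <= (2 * N (evZ (r i) z)) ^+ i.
    by apply: lerXn2r; rewrite ?nnegrE ?N_ge0 //; [lra|lra].
  rewrite exprMn in e1; apply: le_trans e1 _.
  apply: ler_wpM2r; first by rewrite exprn_ge0 // N_ge0.
  apply: ler_weXn2l; first lra.
  by rewrite /k leq_pmulr // -subn1 subn_gt0.
- by rewrite (NX R) exprn_ge0 // N_ge0.
rewrite eqxx mul1n (NX R).
have hd := @T2_size R (r i0) (3 / 2) m (8 * rI) ltac:(lra) HT'.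
have q := F2b z hz; rewrite -/z0 in q.
have i0n : i0 != 0%N by rewrite -lt0n; case/andP: hi0.
have e1 : N (evZ (r i0) z0) ^+ i0 < (4 * N (evZ (r i0) z)) ^+ i0.
  by rewrite ltrXn2r // N_ge0.
apply: lt_le_trans e1 _; rewrite exprMn.
rewrite (NX R).
apply: ler_wpM2r; first by rewrite exprn_ge0 // N_ge0.
have h4 : (4 : R) ^+ i0 = 2 ^+ (2 * i0).
  by rewrite exprM (_ : (2:R) ^+ 2 = 4) // expr2; lra.
rewrite h4; apply: ler_weXn2l; first lra.
move: hd; case: (size (r i0)) => // [[|d]] // _ /=.
by rewrite mulnS; lia.
Qed.

Theorem theorem3 (R : realType) (f g : {poly {poly int}})
  (ry rx : nat -> {poly int}) (i0 j0 : nat) (alpha beta a b c d : R) :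
  no_common_factor f g ->
  (* square-free factorizations of R^(y) and R^(x) *)
  sqfree_factorization (res_y f g) ry ->
  sqfree_factorization (res_x f g) rx ->
  (* alpha is a real root of R^(y), lying on the factor r_{i0} *)
  evZ (res_y f g) alpha = 0 ->
  (1 <= i0 <= (size (res_y f g)).-1)%N -> evZ (ry i0) alpha = 0 ->
  admissible_interval (res_y f g) ry i0 alpha a b ->
  (* beta is a real root of R^(x), lying on the factor r_{j0} *)
  evZ (res_x f g) beta = 0 ->
  (1 <= j0 <= (size (res_x f g)).-1)%N -> evZ (rx j0) beta = 0 ->
  admissible_interval (res_x f g) rx j0 beta c d ->
  let mA := ((a + b) / 2)%:C%C in let rA := (2 * ((b - a) / 2))%:C%C in
  let mB := ((c + d) / 2)%:C%C in let rB := (2 * ((d - c) / 2))%:C%C in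
  (* (1) every common zero of f, g in the polydisc is (alpha, beta) *)
  (forall z1 z2 : R[i], `|z1 - mA| < rA -> `|z2 - mB| < rB ->
      evXY f z1 z2 = 0 -> evXY g z1 z2 = 0 ->
      z1 = alpha%:C%C /\ z2 = beta%:C%C) /\
  (* (2) lower bounds on the boundary *)
  (forall z1 : R[i], `|z1 - mA| = rA ->
      (Lbound (res_y f g) i0 a b)%:C%C < `|evZ (res_y f g) z1|) /\
  (forall z2 : R[i], `|z2 - mB| = rB ->
      (Lbound (res_x f g) j0 c d)%:C%C < `|evZ (res_x f g) z2|).
Proof.
move=> _ Hy Hx hay hi0 hai Hadm hbx hj0 hbj Hadm2 mA rA mB rB.
have [My1 My2] := @Main R _ _ _ _ _ _ Hy hi0 hai Hadm.
have [Mx1 Mx2] := @Main R _ _ _ _ _ _ Hx hj0 hbj Hadm2.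
split; [|split].
- move=> z1 z2 h1 h2 f0 g0.
  rewrite /rA ltN in h1; rewrite /rB ltN in h2.
  split.
  + case: (@res_y_zero _ f g z1 z2 f0 g0) => [h|h]; first exact: My1.
    by move: hay; rewrite h evZ1 => /eqP; rewrite oner_eq0.
  + case: (@res_x_zero _ f g z1 z2 f0 g0) => [h|h]; first exact: Mx1.
    by move: hbx; rewrite h evZ1 => /eqP; rewrite oner_eq0.
- move=> z1; rewrite /rA eqN => h; rewrite normE ltcR; exact: My2.
- move=> z2; rewrite /rB eqN => h; rewrite normE ltcR; exact: Mx2.
Qed.
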